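(* Let $\kappa\in K_2(\mathbb{Q}(T))$. Then there exist a finite set $\Sigma$ of rational points of $S^1$ and a locally constant function $n=n_\kappa\colon S^1\setminus\Sigma\to\mathbb{Z}$ such that for every primitive $\lambda\in X$ with $\mathbb{R}_+\lambda\notin\Sigma$, the residue (tame symbol) of $\kappa$ along the boundary divisor $D_\lambda\cong\mathbb{G}_m$ equals $c\,z^{n(\mathbb{R}_+\lambda)}$ for some constant $c\in\mathbb{Q}^\times$.
   Context: $T=\mathbb{G}_m^2=\operatorname{Spec}\mathbb{Q}[X^*]$ over $\mathbb{Q}$, with cocharacter lattice $X\cong\mathbb{Z}^2$, character lattice $X^*$, and pairing $\langle\,,\rangle\colon X\times X^*\to\mathbb{Z}$. Fix an orientation of $X_{\mathbb{R}}=X\otimes\mathbb{R}$, giving $\wedge\colon X\times X\to\mathbb{Z}$ with $\bigwedge^2X\cong\mathbb{Z}$. $S^1=(X_{\mathbb{R}}\setminus\{0\})/\mathbb{R}_+$ is the circle of rays; a ray is rational if it contains a nonzero point of $X$. For primitive $\lambda\in X$ let $V_\lambda=\{\chi\in X^*:\langle\lambda,\chi\rangle\le0\}$ and $T_\lambda=\operatorname{Spec}\mathbb{Q}[V_\lambda]$, a partial toric compactification of $T$; $D_\lambda=T_\lambda\setminus T$ is an irreducible divisor, $T$-equivariantly isomorphic to $T/\lambda(\mathbb{G}_m)$, and a character $\chi$ vanishes along $D_\lambda$ to order $-\langle\lambda,\chi\rangle$. $D_\lambda$ is identified with $\mathbb{G}_m$ (coordinate $z$) via $\mathbb{G}_m\xrightarrow{\mu}T\to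 T/\lambda(\mathbb{G}_m)$ for any $\mu\in X$ with $\mu\wedge\lambda=1$. The residue along $D_\lambda$ is the tame symbol $\{f,g\}\mapsto(-1)^{v(f)v(g)}g^{v(f)}f^{-v(g)}$ for the valuation $v$ of $D_\lambda$ on $\mathbb{Q}(T)$. *)

(* Defs.v *)
From HB Require Import structures.
From mathcomp Require Import all_boot all_order all_algebra.
From mathcomp Require Import fraction.
From mathcomp Require Import Rstruct.
From Stdlib Require Import Rdefinitions.
Set Implicit Arguments. Unset Strict Implicit. Unset Printing Implicit Defensive.
Import Order.TTheory GRing.Theory Num.Theory.
Local Open Scope ring_scope.

(* Cocharacters X = Z^2 and characters X^* = Z^2. *)
Definition cochar := (int * int)%type.
Definition charac := (int * int)%type.

Definition pairing (l : cochar) (c : charac) : int := l.1 * c.1 + l.2 * c.2.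
Definition wedge (m l : cochar) : int := m.1 * l.2 - m.2 * l.1.
Definition primitive (l : cochar) : bool := gcdz l.1 l.2 == 1.

(* Laurent polynomials in Q[X^*]: sum over chi in (undup supp) of coef chi * chi *)
Record lpoly := LPoly { lp_supp : seq charac ; lp_coef : charac -> rat }.
Definition lp_support (p : lpoly) : seq charac :=
  [seq c <- undup (lp_supp p) | lp_coef p c != 0].
Definition lp_nonzero (p : lpoly) : bool := lp_support p != [::].

(* order of vanishing along D_lambda: a character chi vanishes to order
   -<lambda,chi>; for a Laurent polynomial it is the minimum over its support *)
Definition ordv (l : cochar) (p : lpoly) : int :=
  match lp_support p with
  | [::] => 0
  | c :: s => foldr (fun c' m => Num.min (- pairing l c') m) (- pairing l c) s
  end.

(* the field Q(z) of rational functions on D_lambda = G_m, and z *)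
Definition Qz := {fraction {poly rat}}.
Definition zF : Qz := tofrac ('X : {poly rat}).

(* initial form of p along D_lambda, pulled back along mu : G_m -> T
   (chi |-> z^<mu,chi>) *)
Definition inres (l m : cochar) (p : lpoly) : Qz :=
  \sum_(c <- lp_support p | - pairing l c == ordv l p)
     tofrac ((lp_coef p c)%:P) * zF ^ (pairing m c).

(* a nonzero rational function f = p/q in Q(T) is given by a pair (p, q) *)
Definition ratfun := (lpoly * lpoly)%type.
Definition rf_nonzero (f : ratfun) : bool := lp_nonzero f.1 && lp_nonzero f.2.
Definition vF (l : cochar) (f : ratfun) : int := ordv l f.1 - ordv l f.2.
(* restriction to D_lambda (identified with G_m via mu) of the leading term *)
Definition resF (l m : cochar) (f : ratfun) : Qz := inres l m f.1 / inres l m f.2.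

Definition tame (l m : cochar) (f g : ratfun) : Qz :=
  (-1) ^ (vF l f * vF l g) * resF l m g ^ (vF l f) * resF l m f ^ (- vF l g).

(* an element of K_2(Q(T)) is a product of Steinberg symbols {f_i, g_i} *)
Definition K2rep := seq (ratfun * ratfun).
Definition K2rep_ok (k : K2rep) : bool :=
  all (fun s => rf_nonzero s.1 && rf_nonzero s.2) k.
Definition residue (l m : cochar) (k : K2rep) : Qz :=
  \prod_(s <- k) tame l m s.1 s.2.

(* The circle of rays S^1 = (R^2 \ 0)/R_+, modelled as the unit circle in R^2 *)
Definition on_circle (x : R * R) : Prop := x.1 ^+ 2 + x.2 ^+ 2 = 1.
Definition ray (l : cochar) : R * R :=
  let r := Num.sqrt ((l.1)%:~R ^+ 2 + (l.2)%:~R ^+ 2 : R) in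
  ((l.1)%:~R / r, (l.2)%:~R / r).
Definition in_rays (Sig : seq cochar) (x : R * R) : Prop :=
  exists s, s \in Sig /\ ray s = x.
Definition locally_const_off (Sig : seq cochar) (n : R * R -> int) : Prop :=
  forall x, on_circle x -> ~ in_rays Sig x ->
  exists e : R, 0 < e /\
    forall y, on_circle y -> ~ in_rays Sig y ->
      (x.1 - y.1) ^+ 2 + (x.2 - y.2) ^+ 2 < e -> n y = n x.

(* Main.v *)
Require Import Defs.
From HB Require Import structures.
From mathcomp Require Import all_boot all_order all_algebra.
From mathcomp Require Import fraction.
From mathcomp Require Import Rstruct.
From Stdlib Require Import Rdefinitions.
From mathcomp Require Import ring lra.
From Stdlib Require Import FunctionalExtensionality.
Import Order.TTheory GRing.Theory Num.Theory.
Local Open Scope ring_scope.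
Set Implicit Arguments. Unset Strict Implicit.


Definition K : rat -> Qz := (@tofrac _ \o polyC).
Definition dsub (c c' : charac) : charac := (c.1 - c'.1, c.2 - c'.2).
Definition amax (o : charac -> bool) (S : seq charac) : charac :=
  match S with [::] => (0, 0) | c :: s =>
    foldr (fun c' b => if o (dsub c' b) then c' else b) c s end.

Lemma pairing_dsub l c c' : pairing l (dsub c c') = pairing l c - pairing l c'.
Proof. rewrite /pairing /dsub /=; ring. Qed.

Section Alg.
Variables (l : cochar) (o : charac -> bool) (S : seq charac).
Hypothesis Ho : forall c c', c \in S -> c' \in S -> o (dsub c c') = (0 < pairing l (dsub c c')).

Lemma amax_fold c s : {subset c :: s <= S} ->
  let b := foldr (fun c' b => if o (dsub c' b) then c' else b) c s in
  b \in c :: s /\ forall c'', c'' \in c :: s -> pairing l c'' <= pairing l b.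
Proof.
elim: s => [|c' s IH] sub /=.
  by split; [rewrite mem_head | move=> c''; rewrite inE => /eqP ->].
have sub' : {subset c :: s <= S}.
  move=> x; rewrite inE => /orP [/eqP ->|hx]; apply: sub; rewrite !inE ?eqxx //.
  by rewrite hx !orbT.
have [IH1 IH2] := IH sub'.
set b := foldr _ c s in IH1 IH2 *.
have c'S : c' \in S by apply: sub; rewrite !inE eqxx orbT.
rewrite Ho // ?(sub' _ IH1) // pairing_dsub subr_gt0.
case: ltP => H; split.
- by rewrite !inE eqxx orbT.
- move=> x; rewrite !inE => /orP [/eqP ->|/orP [/eqP ->//|hx]].
    by apply: ltW; apply: le_lt_trans H; apply: IH2; rewrite mem_head.
  by apply: ltW; apply: le_lt_trans H; apply: IH2; rewrite inE hx orbT.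
- by move: IH1; rewrite !inE => /orP [->|->]; rewrite ?orbT.
- move=> x; rewrite !inE => /orP [/eqP ->|/orP [/eqP ->//|hx]].
    by apply: IH2; rewrite mem_head.
  by apply: IH2; rewrite inE hx orbT.
Qed.

Lemma amax_spec : S != [::] ->
  amax o S \in S /\ forall c, c \in S -> pairing l c <= pairing l (amax o S).
Proof.
rewrite /amax; case E: S => [//|c s] _.
have := @amax_fold c s; rewrite -E; apply; by [].
Qed.
End Alg.

Lemma foldmin (l : cochar) c s :
  let v := foldr (fun c' m => Num.min (- pairing l c') m) (- pairing l c) s in
  (forall x, x \in c :: s -> v <= - pairing l x) /\ exists2 x, x \in c :: s & v = - pairing l x.
Proof.
elim: s => [|c' s [IH1 [x hx IH2]]] /=.
  by split; [move=> x; rewrite inE => /eqP -> | exists c; rewrite ?mem_head].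
split.
  move=> y; rewrite !inE => /orP [/eqP ->|/orP [/eqP ->|hy]].
  - rewrite ge_min; apply/orP; right; apply: IH1; exact: mem_head.
  - by rewrite ge_min lexx.
  - rewrite ge_min; apply/orP; right; apply: IH1; by rewrite inE hy orbT.
case: (leP (- pairing l c') (foldr (fun c'0 m => Num.min (- pairing l c'0) m) (- pairing l c) s)) => H.
  exists c'; rewrite ?inE ?eqxx ?orbT //; apply/eqP; rewrite eq_le ge_min lexx le_min lexx H //.
exists x; first by move: hx; rewrite !inE => /orP [->|->]; rewrite ?orbT.
rewrite IH2 in H *; apply/eqP; rewrite eq_le ?ge_min ?le_min ?lexx ?orbT ?andbT ?ltW //.
Qed.

Lemma supp_uniq p : uniq (lp_support p).
Proof. by rewrite /lp_support filter_uniq // undup_uniq. Qed.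

Lemma supp_coef p c : c \in lp_support p -> lp_coef p c != 0.
Proof. by rewrite /lp_support mem_filter => /andP []. Qed.

Section Poly.
Variables (l m : cochar) (o : charac -> bool) (p : lpoly).
Let S := lp_support p.
Hypothesis Ho : forall c c', c \in S -> c' \in S -> o (dsub c c') = (0 < pairing l (dsub c c')).
Hypothesis Hg : forall c c', c \in S -> c' \in S -> c != c' -> pairing l c != pairing l c'.
Hypothesis Hne : S != [::].

Lemma ordv_amax : ordv l p = - pairing l (amax o S).
Proof.
have [aS amx] := amax_spec Ho Hne.
rewrite /ordv -/S; move: Hne aS amx; case: S => [//|c s] _ aS amx.
have [H1 [x hx H2]] := foldmin l c s.
apply/eqP; rewrite eq_le H1 // H2 lerN2 amx //.
Qed.

Lemma inres_amax : inres l m p = K (lp_coef p (amax o S)) * zF ^ (pairing m (amax o S)).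
Proof.
have [aS amx] := amax_spec Ho Hne.
rewrite /inres -/S big_mkcond (bigD1_seq (amax o S)) //=; last exact: supp_uniq.
rewrite ordv_amax eqxx big1_seq ?addr0 //.
move=> i /andP [ia iS]; case: eqP => // /eqP; rewrite eqr_opp => /eqP E.
by move: (Hg iS aS ia); rewrite E eqxx.
Qed.
End Poly.

Definition det (A B : charac) : int := A.1 * B.2 - A.2 * B.1.

Lemma zF_neq0 : zF != 0.
Proof. by rewrite /zF tofrac_eq0 polyX_eq0. Qed.

Lemma KX (c : rat) (n : int) : K c ^ n = K (c ^ n).
Proof. symmetry; exact: (fmorphXz K). Qed.
Lemma KM (c d : rat) : K c * K d = K (c * d).
Proof. by rewrite -(rmorphM K). Qed.
Lemma KN1 : K (-1) = -1.
Proof. exact: (rmorphN1 K). Qed.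
Lemma KV (c : rat) : (K c)^-1 = K (c^-1).
Proof. symmetry; exact: (fmorphV K). Qed.

Lemma wedge_id (l m A B : charac) : wedge m l = 1 ->
  pairing m B * (- pairing l A) + pairing m A * (- - pairing l B) = det A B.
Proof.
move=> H; rewrite /det -[RHS]mul1r -H /wedge /pairing; ring.
Qed.

Lemma tame_form l m f g cf cg A B :
  wedge m l = 1 -> cf != 0 -> cg != 0 ->
  resF l m f = K cf * zF ^ pairing m A -> vF l f = - pairing l A ->
  resF l m g = K cg * zF ^ pairing m B -> vF l g = - pairing l B ->
  exists2 c, c != 0 & tame l m f g = K c * zF ^ det A B.
Proof.
move=> Hw hf hg Rf Vf Rg Vg.
rewrite /tame Rf Rg Vf Vg.
exists ((-1) ^ ((- pairing l A) * (- pairing l B)) * cg ^ (- pairing l A) * cf ^ (- - pairing l B)).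
  by rewrite !mulf_neq0 // expfz_neq0 // ?oppr_eq0 ?oner_eq0.
rewrite !expfzMl !exprz_exp -KN1 !KX.
rewrite -(wedge_id A B Hw) (expfzDr _ _ zF_neq0) -!KM.
ring.
Qed.

Section RF.
Variables (l m : cochar) (o : charac -> bool) (f : ratfun).
Let S1 := lp_support f.1.
Let S2 := lp_support f.2.
Hypothesis Ho1 : forall c c', c \in S1 -> c' \in S1 -> o (dsub c c') = (0 < pairing l (dsub c c')).
Hypothesis Hg1 : forall c c', c \in S1 -> c' \in S1 -> c != c' -> pairing l c != pairing l c'.
Hypothesis Hne1 : S1 != [::].
Hypothesis Ho2 : forall c c', c \in S2 -> c' \in S2 -> o (dsub c c') = (0 < pairing l (dsub c c')).
Hypothesis Hg2 : forall c c', c \in S2 -> c' \in S2 -> c != c' -> pairing l c != pairing l c'.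
Hypothesis Hne2 : S2 != [::].

Definition Aof (o' : charac -> bool) (f' : ratfun) :=
  dsub (amax o' (lp_support f'.1)) (amax o' (lp_support f'.2)).
Definition cof (o' : charac -> bool) (f' : ratfun) :=
  lp_coef f'.1 (amax o' (lp_support f'.1)) / lp_coef f'.2 (amax o' (lp_support f'.2)).

Lemma vF_amax : vF l f = - pairing l (Aof o f).
Proof.
rewrite /vF (ordv_amax Ho1 Hne1) (ordv_amax Ho2 Hne2) /Aof pairing_dsub; ring.
Qed.

Lemma resF_amax : resF l m f = K (cof o f) * zF ^ pairing m (Aof o f).
Proof.
rewrite /resF (inres_amax m Ho1 Hg1 Hne1) (inres_amax m Ho2 Hg2 Hne2).
rewrite /Aof /cof pairing_dsub [in RHS](expfzDr _ _ zF_neq0) -invr_expz invfM KV -KM.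
ring.
Qed.

Lemma cof_neq0 : cof o f != 0.
Proof.
have [a1 _] := amax_spec Ho1 Hne1; have [a2 _] := amax_spec Ho2 Hne2.
by rewrite /cof mulf_neq0 // ?invr_eq0 supp_coef.
Qed.
End RF.

Fixpoint allK (P : lpoly -> Prop) (k : K2rep) : Prop :=
  match k with
  | [::] => True
  | s :: k' => [/\ P s.1.1, P s.1.2, P s.2.1, P s.2.2 & allK P k']
  end.

Lemma allK_mono (P Q : lpoly -> Prop) k : (forall p, P p -> Q p) -> allK P k -> allK Q k.
Proof. by move=> H; elim: k => [//|s k IH] /= [*]; split; auto. Qed.

Lemma allK_and (P Q : lpoly -> Prop) k : allK P k -> allK Q k -> allK (fun p => P p /\ Q p) k.
Proof. by elim: k => [//|s k IH] /= [? ? ? ? ?] [? ? ? ? ?]; split; auto. Qed.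

Definition Good (l : cochar) (o : charac -> bool) (p : lpoly) :=
  let S := lp_support p in
  [/\ forall c c', c \in S -> c' \in S -> o (dsub c c') = (0 < pairing l (dsub c c')),
      forall c c', c \in S -> c' \in S -> c != c' -> pairing l c != pairing l c'
    & S != [::]].

Definition Nof (o : charac -> bool) (k : K2rep) : int :=
  \sum_(s <- k) det (Aof o s.1) (Aof o s.2).

Lemma residue_form l m o k : wedge m l = 1 -> allK (Good l o) k ->
  exists2 c, c != 0 & residue l m k = K c * zF ^ Nof o k.
Proof.
move=> Hw; elim: k => [|s k IH] /=.
  move=> _; exists 1; rewrite ?oner_eq0 // /residue /Nof !big_nil expr0z mulr1; symmetry; exact: (rmorph1 K).
move=> [[a1 b1 c1] [a2 b2 c2] [a3 b3 c3] [a4 b4 c4] Hk].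
have [c hc Hc] := IH Hk.
have [d hd Hd] := tame_form Hw (cof_neq0 a1 c1 a2 c2) (cof_neq0 a3 c3 a4 c4)
  (resF_amax m a1 b1 c1 a2 b2 c2) (vF_amax a1 c1 a2 c2)
  (resF_amax m a3 b3 c3 a4 b4 c4) (vF_amax a3 c3 a4 c4).
exists (d * c); first by rewrite mulf_neq0.
rewrite /residue /Nof !big_cons -/(residue l m k) Hc Hd -/(Nof o k) [in RHS](expfzDr _ _ zF_neq0) -KM.
ring.
Qed.


Definition rotc (d : charac) : cochar := (- d.2, d.1).
Definition negc (d : cochar) : cochar := (- d.1, - d.2).
Definition preal (x : R * R) (d : charac) : R := x.1 * (d.1)%:~R + x.2 * (d.2)%:~R.
Lemma prealE x d : preal x d = x.1 * (d.1)%:~R + x.2 * (d.2)%:~R.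
Proof. by []. Qed.

Lemma perp_core (x1 x2 a b : R) : x1 ^+ 2 + x2 ^+ 2 = 1 -> 0 < a ^+ 2 + b ^+ 2 ->
  x1 * a + x2 * b = 0 ->
  (x1 = - b / Num.sqrt ((- b) ^+ 2 + a ^+ 2) /\ x2 = a / Num.sqrt ((- b) ^+ 2 + a ^+ 2)) \/
  (x1 = - - b / Num.sqrt ((- - b) ^+ 2 + (- a) ^+ 2) /\ x2 = - a / Num.sqrt ((- - b) ^+ 2 + (- a) ^+ 2)).
Proof.
move=> Hc ab Hp.
have E1 : (- b) ^+ 2 + a ^+ 2 = a ^+ 2 + b ^+ 2 by rewrite sqrrN addrC.
have E2 : (- - b) ^+ 2 + (- a) ^+ 2 = a ^+ 2 + b ^+ 2 by rewrite opprK sqrrN addrC.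
rewrite E1 E2 opprK.
set r := Num.sqrt (a ^+ 2 + b ^+ 2).
have r0 : 0 < r by rewrite sqrtr_gt0.
have r2 : r ^+ 2 = a ^+ 2 + b ^+ 2 by rewrite sqr_sqrtr // ltW.
have rn0 : r != 0 by rewrite gt_eqF.
set s := x2 * a - x1 * b.
have s2 : s ^+ 2 = r ^+ 2.
  rewrite r2; have : s ^+ 2 + (x1 * a + x2 * b) ^+ 2 = (x1 ^+ 2 + x2 ^+ 2) * (a ^+ 2 + b ^+ 2).
    rewrite /s; ring.
  by rewrite Hp Hc expr0n /= addr0 mul1r.
have X1 : x1 * r ^+ 2 = - b * s.
  rewrite r2 /s; apply/eqP; rewrite -subr_eq0; apply/eqP.
  transitivity (a * (x1 * a + x2 * b)); first ring. by rewrite Hp mulr0.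
have X2 : x2 * r ^+ 2 = a * s.
  rewrite r2 /s; apply/eqP; rewrite -subr_eq0; apply/eqP.
  transitivity (b * (x1 * a + x2 * b)); first ring. by rewrite Hp mulr0.
have : (s - r) * (s + r) = 0 by rewrite -subr_sqr s2 subrr.
move/eqP; rewrite mulf_eq0 => /orP [/eqP H|/eqP H].
- have Hs : s = r by apply/eqP; rewrite -subr_eq0 H.
  rewrite Hs in X1 X2; left; split; apply: (mulIf rn0); rewrite mulfVK //;
    apply: (mulIf rn0); rewrite -mulrA -expr2 ?X1 ?X2 //.
- have Hs : s = - r by apply/eqP; rewrite -subr_eq0 opprK H.
  rewrite Hs in X1 X2; right; split; apply: (mulIf rn0); rewrite mulfVK //;
    apply: (mulIf rn0); rewrite -mulrA -expr2 ?X1 ?X2; ring.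
Qed.

Lemma perp_ray (x : R * R) (d : charac) : on_circle x -> d != (0, 0) -> preal x d = 0 ->
  x = ray (rotc d) \/ x = ray (negc (rotc d)).
Proof.
case: x => x1 x2; case: d => d1 d2; rewrite /on_circle /preal /ray /rotc /negc /= => Hc Hd Hp.
have ab : 0 < (d1%:~R : R) ^+ 2 + (d2%:~R : R) ^+ 2.
  have : (d1 != 0) || (d2 != 0) by apply: contraNT Hd; rewrite negb_or !negbK => /andP [/eqP -> /eqP ->].
  case/orP => H.
    have : 0 < (d1%:~R : R) ^+ 2 by rewrite exprn_even_gt0 //= intr_eq0.
    have : 0 <= (d2%:~R : R) ^+ 2 by rewrite sqr_ge0.
    lra.
  have : 0 < (d2%:~R : R) ^+ 2 by rewrite exprn_even_gt0 //= intr_eq0.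
  have : 0 <= (d1%:~R : R) ^+ 2 by rewrite sqr_ge0.
  lra.
rewrite !intrN.
case: (perp_core Hc ab Hp) => [[-> ->]|[-> ->]]; [left|right]; by [].
Qed.

Lemma nz_sq (d1 d2 : int) : (d1, d2) != (0, 0) -> 0 < (d1%:~R : R) ^+ 2 + (d2%:~R : R) ^+ 2.
Proof.
move=> Hd.
have : (d1 != 0) || (d2 != 0) by apply: contraNT Hd; rewrite negb_or !negbK => /andP [/eqP -> /eqP ->].
case/orP => H.
  have : 0 < (d1%:~R : R) ^+ 2 by rewrite exprn_even_gt0 //= intr_eq0.
  have : 0 <= (d2%:~R : R) ^+ 2 by rewrite sqr_ge0.
  lra.
have : 0 < (d2%:~R : R) ^+ 2 by rewrite exprn_even_gt0 //= intr_eq0.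
have : 0 <= (d1%:~R : R) ^+ 2 by rewrite sqr_ge0.
lra.
Qed.

Lemma ray_core (a b u v : R) : 0 < a ^+ 2 + b ^+ 2 ->
  let r := Num.sqrt (a ^+ 2 + b ^+ 2) in
  [/\ 0 < r, (a / r) ^+ 2 + (b / r) ^+ 2 = 1 & a / r * u + b / r * v = (a * u + b * v) / r].
Proof.
move=> ab r.
have r0 : 0 < r by rewrite sqrtr_gt0.
have r2 : r ^+ 2 = a ^+ 2 + b ^+ 2 by rewrite sqr_sqrtr // ltW.
split => //.
  by rewrite !expr_div_n -mulrDl -r2 divff // expf_neq0 // gt_eqF.
by rewrite mulrDl [a / r * u]mulrAC [b / r * v]mulrAC.
Qed.


Lemma ray_on_circle (l : cochar) : l != (0, 0) -> on_circle (ray l).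
Proof.
case: l => l1 l2 Hl; have [_ H _] := ray_core 0 0 (nz_sq Hl); exact: H.
Qed.

Lemma preal_ray (l : cochar) (d : charac) : l != (0, 0) ->
  exists2 r : R, 0 < r & preal (ray l) d = (pairing l d)%:~R / r.
Proof.
case: l => l1 l2 Hl; have [H0 _ H] := ray_core d.1%:~R d.2%:~R (nz_sq Hl).
eexists; first exact: H0.
rewrite /pairing /= intrD !intrM; exact: H.
Qed.

Lemma sign_core (v t1 t2 a b e : R) : v != 0 -> t1 ^+ 2 + t2 ^+ 2 < e ->
  e <= v ^+ 2 / (1 + a ^+ 2 + b ^+ 2) -> (0 < v) = (0 < v + (t1 * a + t2 * b)).
Proof.
move=> v0 He Hv.
have q0 : 0 < 1 + a ^+ 2 + b ^+ 2.
  have := sqr_ge0 a; have := sqr_ge0 b; lra.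
have CS : (t1 * a + t2 * b) ^+ 2 <= (t1 ^+ 2 + t2 ^+ 2) * (a ^+ 2 + b ^+ 2).
  have : 0 <= (t1 * b - t2 * a) ^+ 2 by exact: sqr_ge0.
  have -> : (t1 ^+ 2 + t2 ^+ 2) * (a ^+ 2 + b ^+ 2) = (t1 * a + t2 * b) ^+ 2 + (t1 * b - t2 * a) ^+ 2 by ring.
  lra.
have T0 : 0 <= t1 ^+ 2 + t2 ^+ 2 by have := sqr_ge0 t1; have := sqr_ge0 t2; lra.
have H2 : (t1 ^+ 2 + t2 ^+ 2) * (a ^+ 2 + b ^+ 2) <= (t1 ^+ 2 + t2 ^+ 2) * (1 + a ^+ 2 + b ^+ 2).
  by apply: ler_wpM2l => //; lra.
have H3 : (t1 ^+ 2 + t2 ^+ 2) * (1 + a ^+ 2 + b ^+ 2) < e * (1 + a ^+ 2 + b ^+ 2).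
  by rewrite ltr_pM2r.
have H4 : e * (1 + a ^+ 2 + b ^+ 2) <= v ^+ 2.
  by rewrite -ler_pdivlMr.
set w := t1 * a + t2 * b in CS *.
have Hw : w ^+ 2 < v ^+ 2 by lra.
have : 0 < v * (v + w) by nra.
case: (ltrP 0 v) => h.
  by move=> H; apply/esym; rewrite -(pmulr_rgt0 _ h).
move=> H; apply/esym/negbTE; rewrite -leNgt.
have hv : v < 0 by rewrite lt_neqAle v0 h.
by move: H; rewrite nmulr_rgt0 // => /ltW.
Qed.

Definition fe (x : R * R) (d : charac) : R :=
  preal x d ^+ 2 / (1 + (d.1%:~R : R) ^+ 2 + (d.2%:~R : R) ^+ 2).

Lemma pos3 (a b : R) : 0 < 1 + a ^+ 2 + b ^+ 2.
Proof. have := sqr_ge0 a; have := sqr_ge0 b; lra. Qed.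

Lemma fe_gt0 x d : preal x d != 0 -> 0 < fe x d.
Proof.
move=> H; rewrite /fe divr_gt0 ?pos3 //; by rewrite exprn_even_gt0.
Qed.

Lemma emin x (D : seq charac) : (forall d, d \in D -> d != (0,0) -> preal x d != 0) ->
  exists e : R, 0 < e /\ forall d, d \in D -> d != (0,0) -> e <= fe x d.
Proof.
elim: D => [|d D IH] H.
  by exists 1; split => //.
have [e [e0 He]] : exists e : R, 0 < e /\ forall d, d \in D -> d != (0,0) -> e <= fe x d.
  by apply: IH => d' hd'; apply: H; rewrite inE hd' orbT.
case: (boolP (d == (0, 0))) => dz.
  exists e; split => // d'; rewrite inE => /orP [/eqP ->|hd']; first by rewrite dz.
  exact: He.
exists (Num.min (fe x d) e); split.
  by rewrite lt_min e0 fe_gt0 ?H ?mem_head.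
move=> d'; rewrite inE => /orP [/eqP ->|hd'] dz'.
  by rewrite ge_min lexx.
by rewrite ge_min He ?orbT.
Qed.

Lemma preal0 x : preal x (0, 0) = 0.
Proof. by rewrite prealE /= !mulr0z !mulr0 addr0. Qed.


Lemma local_signs (x : R * R) (D : seq charac) :
  (forall d, d \in D -> d != (0,0) -> preal x d != 0) ->
  exists e : R, 0 < e /\ forall y : R * R, (x.1 - y.1) ^+ 2 + (x.2 - y.2) ^+ 2 < e ->
    forall d, d \in D -> (0 < preal y d) = (0 < preal x d).
Proof.
move=> H; have [e [e0 He]] := emin H.
exists e; split => // y Hy d hd.
case: (boolP (d == (0, 0))) => dz.
  by rewrite (eqP dz) !preal0.
have Hy' : (y.1 - x.1) ^+ 2 + (y.2 - x.2) ^+ 2 < e.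
  by rewrite -(sqrrN (y.1 - x.1)) -(sqrrN (y.2 - x.2)) !opprB.
have := sign_core (H d hd dz) Hy' (He d hd dz).
have -> : preal x d + ((y.1 - x.1) * d.1%:~R + (y.2 - x.2) * d.2%:~R) = preal y d.
  by rewrite !prealE; ring.
by move=> ->.
Qed.


Fixpoint charsK (k : K2rep) : seq charac :=
  match k with
  | [::] => [::]
  | s :: k' => lp_support s.1.1 ++ lp_support s.1.2 ++ lp_support s.2.1 ++
               lp_support s.2.2 ++ charsK k'
  end.
Definition Dk k := [seq dsub c c' | c <- charsK k, c' <- charsK k].
Definition Sigk k := flatten [seq [:: rotc d; negc (rotc d)] | d <- [seq d <- Dk k | d != (0, 0)]].
Definition oR k (x : R * R) d := (d \in Dk k) && (0 < preal x d).
Definition oZ k (l : cochar) d := (d \in Dk k) && (0 < pairing l d).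

Lemma charsK_sub k (C : seq charac) : {subset charsK k <= C} ->
  allK (fun p => {subset lp_support p <= C}) k.
Proof.
elim: k => [//|s k IH] /= H; split; try (apply: IH); move=> x hx; apply: H;
  rewrite !mem_cat hx ?orbT //.
Qed.

Lemma nonempty k : K2rep_ok k -> allK (fun p => lp_support p != [::]) k.
Proof.
elim: k => [//|s k IH] /= /andP [/andP [/andP [h1 h2] /andP [h3 h4]] hk].
by split; auto.
Qed.

Lemma dsub_eq0 c c' : (dsub c c' == (0, 0)) = (c == c').
Proof. by case: c c' => [a b] [a' b']; rewrite /dsub !xpair_eqE !subr_eq0. Qed.

Lemma inSig k d : d \in Dk k -> d != (0, 0) ->
  rotc d \in Sigk k /\ negc (rotc d) \in Sigk k.
Proof.
move=> hd dz.
have H : [:: rotc d; negc (rotc d)] \in [seq [:: rotc d; negc (rotc d)] | d <- [seq d <- Dk k | d != (0, 0)]].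
  by apply: (map_f (fun d => [:: rotc d; negc (rotc d)])); rewrite mem_filter dz hd.
split; apply/flattenP; exists [:: rotc d; negc (rotc d)] => //; rewrite !inE eqxx ?orbT //.
Qed.

Lemma Sig_nz k s : s \in Sigk k -> s != (0, 0).
Proof.
case/flattenP => t /mapP [d]; rewrite mem_filter => /andP [dz _] -> {t}.
case: d dz => d1 d2 dz; rewrite !inE /rotc /negc /= => /orP [] /eqP ->;
  apply: contra dz; rewrite !xpair_eqE ?oppr_eq0 => /andP [-> ->] //.
Qed.

Lemma notray k x : on_circle x -> ~ in_rays (Sigk k) x ->
  forall d, d \in Dk k -> d != (0, 0) -> preal x d != 0.
Proof.
move=> Hc Hx d hd dz; apply/eqP => h.
have [s1 s2] := inSig hd dz.
case: (perp_ray Hc dz h) => e; apply: Hx.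
  by exists (rotc d).
by exists (negc (rotc d)).
Qed.

Unset Implicit Arguments.

Theorem mainTheorem13 (kappa : K2rep) (Hk : K2rep_ok kappa) :
  exists Sig : seq cochar,
    (forall s, s \in Sig -> s != (0, 0)) /\
    exists n : R * R -> int,
      locally_const_off Sig n /\
      forall l : cochar, primitive l -> ~ in_rays Sig (ray l) ->
      forall m : cochar, wedge m l = 1 ->
      exists c : rat, c != 0 /\
        residue l m kappa = tofrac (c%:P) * zF ^ (n (ray l)).
Proof.
exists (Sigk kappa); split; first exact: Sig_nz.
exists (fun x => Nof (oR kappa x) kappa); split.
  move=> x Hc Hx.
  have [e [e0 He]] := local_signs (notray Hc Hx).
  exists e; split => // y Hcy Hy Hxy.
  have -> : oR kappa y = oR kappa x => //.
  apply: functional_extensionality => d; rewrite /oR.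
  by case hd: (d \in Dk kappa) => //=; apply: He.
move=> l Hl Hnl m Hw.
have l0 : l != (0, 0) by apply: contraTneq Hl => ->.
have -> : oR kappa (ray l) = oZ kappa l.
  apply: functional_extensionality => d; rewrite /oR /oZ.
  case hd: (d \in Dk kappa) => //=.
  have [r r0 ->] := preal_ray d l0.
  by rewrite pmulr_lgt0 ?invr_gt0 // ltr0z.
have HG : allK (Good l (oZ kappa l)) kappa.
  have Hsub := @charsK_sub kappa (charsK kappa) (fun x h => h).
  apply: allK_mono (allK_and Hsub (nonempty Hk)) => p [sub ne]; split => //.
    move=> c c' hc hc'; rewrite /oZ.
    by have -> : dsub c c' \in Dk kappa by apply: allpairs_f; apply: sub.
  move=> c c' hc hc' cc'; apply/negP => /eqP E.
  have hd : dsub c c' \in Dk kappa by apply: allpairs_f; apply: sub.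
  have dz : dsub c c' != (0, 0) by rewrite dsub_eq0.
  have := notray (ray_on_circle l0) Hnl hd dz.
  have [r r0 ->] := preal_ray (dsub c c') l0.
  by rewrite pairing_dsub E subrr mul0r eqxx.
have [c hc Hc] := residue_form Hw HG.
by exists c; split.
Qed.
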